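(* For every integer $h\ge0$, let $\mathrm{Horiz}_h(z)=\sum_{n\ge0}a_{n,h}z^n$, where $a_{n,h}$ is the number of Motzkin paths of length $n$ of height exactly $h$ that have at least one horizontal step on level $h$, and let $\mathrm{NoHoriz}_h(z)=\sum_{n\ge0}b_{n,h}z^n$, where $b_{n,h}$ is the number of Motzkin paths of length $n$ of height exactly $h$ that have no horizontal step on level $h$. Then $$\mathrm{Horiz}_h(z)=(1+v+v^2)(1-v^{-2})\Big[\frac{v^{2h+4}}{1-v^{2h+4}}-\frac{v^{2h+3}}{1-v^{2h+3}}\Big],$$ $$\mathrm{NoHoriz}_h(z)=(1+v+v^2)(1-v^{-2})\Big[\frac{v^{2h+3}}{1-v^{2h+3}}-\frac{v^{2h+2}}{1-v^{2h+2}}\Big].$$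
   Context: A Motzkin path of length $n$ is a sequence of $n$ steps, each an up-step $(1,1)$, a down-step $(1,-1)$ or a horizontal step $(1,0)$, starting at $(0,0)$, ending at $(n,0)$, and never going below the $x$-axis. Its height is the maximal $y$-coordinate reached. A horizontal step on level $j$ is a horizontal step from $(x,j)$ to $(x+1,j)$. Throughout, $v=v(z)=\frac{1-z-\sqrt{1-2z-3z^2}}{2z}=z+z^2+\cdots$ denotes the formal power series with $v(0)=0$ satisfying $z=\frac{v}{1+v+v^2}$; the expressions above are formal Laurent series in $v$ which are in fact power series in $v$, hence in $z$. *)

(* Defs.v *)
From mathcomp Require Import all_boot all_algebra.
Set Implicit Arguments. Unset Strict Implicit. Unset Printing Implicit Defensive.
Import GRing.Theory Num.Theory.
Local Open Scope ring_scope.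

Inductive step := Up | Down | Flat.

Definition step_delta (a : step) : int :=
  match a with Up => 1 | Down => -1 | Flat => 0 end.

Fixpoint words (n : nat) : seq (seq step) :=
  match n with
  | 0 => [:: [::]]
  | n'.+1 => flatten [seq [:: Up :: w; Down :: w; Flat :: w] | w <- words n']
  end.

Fixpoint levels (y : int) (s : seq step) : seq int :=
  match s with
  | [::] => [::]
  | a :: s' => (y + step_delta a) :: levels (y + step_delta a) s'
  end.

Definition is_motzkin (s : seq step) : bool :=
  all (fun y => 0 <= y) (levels 0 s) && (last 0 (levels 0 s) == 0).

Definition path_height (s : seq step) : int := foldr Num.max 0 (levels 0 s).

Fixpoint horiz_levels (y : int) (s : seq step) : seq int :=
  match s with
  | [::] => [::]
  | a :: s' => (if a is Flat then [:: y] else [::]) ++ horiz_levels (y + step_delta a) s'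
  end.

Definition a_count (n h : nat) : nat :=
  count (fun s => [&& is_motzkin s, path_height s == h%:Z & (h%:Z \in horiz_levels 0 s)])
        (words n).

Definition b_count (n h : nat) : nat :=
  count (fun s => [&& is_motzkin s, path_height s == h%:Z & (h%:Z \notin horiz_levels 0 s)])
        (words n).

Definition fps := nat -> rat.

Definition fps_const (c : rat) : fps := fun n => if n is 0 then c else 0.
Definition fps_one : fps := fps_const 1.
Definition fps_X : fps := fun n => if n == 1%N then 1 else 0.
Definition fps_add (f g : fps) : fps := fun n => f n + g n.
Definition fps_sub (f g : fps) : fps := fun n => f n - g n.
Definition fps_mul (f g : fps) : fps := fun n => \sum_(i < n.+1) f i * g (n - i)%N.
Definition fps_pow (f : fps) (k : nat) : fps := iter k (fps_mul f) fps_one.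

(* first n+1 coefficients of the multiplicative inverse of f (f 0 <> 0) *)
Fixpoint inv_seq (f : fps) (n : nat) : seq rat :=
  match n with
  | 0 => [:: (f 0%N)^-1]
  | n'.+1 => let s := inv_seq f n' in
      rcons s (- (f 0%N)^-1 * \sum_(i < n'.+1) f i.+1 * nth 0 s (n' - i)%N)
  end.
Definition fps_inv (f : fps) : fps := fun n => nth 0 (inv_seq f n) n.

Definition Horiz (h : nat) : fps := fun n => (a_count n h)%:R.
Definition NoHoriz (h : nat) : fps := fun n => (b_count n h)%:R.

Definition onevv (v : fps) : fps := fps_add fps_one (fps_add v (fps_pow v 2)).

(* (1 - v^{-2}) * v^k / (1 - v^k) = (v^k - v^(k-2)) / (1 - v^k), for k >= 2 *)
Definition term (v : fps) (k : nat) : fps :=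
  fps_mul (fps_sub (fps_pow v k) (fps_pow v (k - 2)))
          (fps_inv (fps_sub fps_one (fps_pow v k))).

(* Main.v *)
From HB Require Import structures.
Require Import Defs.
From mathcomp Require Import all_boot all_algebra.
From mathcomp Require Import boolp.
From mathcomp Require Import order zify ring.
Import Order.TTheory.
Set Implicit Arguments. Unset Strict Implicit. Unset Printing Implicit Defensive.
Import GRing.Theory Num.Theory.
Local Open Scope ring_scope.

Record ps : Type := PS { cf : nat -> rat }.
HB.instance Definition _ := gen_eqMixin ps.
HB.instance Definition _ := gen_choiceMixin ps.

Lemma ps_ext (f g : ps) : (forall n, cf f n = cf g n) -> f = g.
Proof. by case: f; case: g => g f H; congr PS; apply: funext => n; apply: H. Qed.

Definition ps0 := PS (fun _ => 0).
Definition psopp (f : ps) := PS (fun n => - cf f n).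
Definition psadd (f g : ps) := PS (fun n => cf f n + cf g n).

Lemma psaddA : associative psadd.
Proof. by move=> f g h; apply: ps_ext => n /=; rewrite addrA. Qed.
Lemma psaddC : commutative psadd.
Proof. by move=> f g; apply: ps_ext => n /=; rewrite addrC. Qed.
Lemma psadd0 : left_id ps0 psadd.
Proof. by move=> f; apply: ps_ext => n /=; rewrite add0r. Qed.
Lemma psaddN : left_inverse ps0 psopp psadd.
Proof. by move=> f; apply: ps_ext => n /=; rewrite addNr. Qed.

HB.instance Definition _ := GRing.isZmodule.Build ps psaddA psaddC psadd0 psaddN.

Definition ps1 := PS fps_one.
Definition psmul (f g : ps) := PS (fps_mul (cf f) (cf g)).

Definition tr (N : nat) (f : nat -> rat) : {poly rat} := \poly_(i < N) f i.

Lemma mul_tr (f g : nat -> rat) n : fps_mul f g n = (tr n.+1 f * tr n.+1 g)`_n.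
Proof.
rewrite coefM /fps_mul; apply: eq_bigr => i _.
by rewrite !coef_poly ltn_ord ltnS leq_subr.
Qed.

Lemma coefM_eq (p p' q q' : {poly rat}) n :
  (forall i, (i <= n)%N -> p`_i = p'`_i) -> (forall i, (i <= n)%N -> q`_i = q'`_i) ->
  (p * q)`_n = (p' * q')`_n.
Proof.
move=> Hp Hq; rewrite !coefM; apply: eq_bigr => i _.
by rewrite Hp ?Hq ?leq_subr // -ltnS.
Qed.

Lemma psmulA : associative psmul.
Proof.
move=> f g h; apply: ps_ext => n /=.
rewrite !mul_tr.
transitivity ((tr n.+1 (cf f) * tr n.+1 (cf g) * tr n.+1 (cf h))`_n); last first.
  apply: coefM_eq => // i Hi; rewrite coef_poly ltnS Hi.
  by rewrite mul_tr; apply: coefM_eq => j Hj; rewrite !coef_poly !ltnS ?Hj ?(leq_trans Hj Hi).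
rewrite -mulrA; apply: coefM_eq => // i Hi; rewrite coef_poly ltnS Hi.
by rewrite mul_tr; apply: coefM_eq => j Hj; rewrite !coef_poly !ltnS ?Hj ?(leq_trans Hj Hi).
Qed.

Lemma psmulC : commutative psmul.
Proof. by move=> f g; apply: ps_ext => n /=; rewrite !mul_tr mulrC. Qed.

Lemma psmul1 : left_id ps1 psmul.
Proof.
move=> f; apply: ps_ext => n /=; rewrite /fps_mul big_ord_recl /= mul1r subn0.
by rewrite big1 ?addr0 // => i _; rewrite mul0r.
Qed.

Lemma psmulDl : left_distributive psmul psadd.
Proof.
move=> f g h; apply: ps_ext => n /=; rewrite /fps_mul -big_split /=.
by apply: eq_bigr => i _; rewrite mulrDl.
Qed.

Lemma ps1_neq0 : ps1 != 0.
Proof. apply/eqP => /(congr1 (fun f => cf f 0%N)) /=; rewrite /fps_one /=. by move/eqP; rewrite oner_eq0. Qed.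

HB.instance Definition _ := GRing.Zmodule_isComNzRing.Build ps psmulA psmulC psmul1 psmulDl ps1_neq0.

Lemma cfD (f g : ps) n : cf (f + g) n = cf f n + cf g n. Proof. by []. Qed.
Lemma cfN (f : ps) n : cf (- f) n = - cf f n. Proof. by []. Qed.
Lemma cfB (f g : ps) n : cf (f - g) n = cf f n - cf g n. Proof. by []. Qed.
Lemma cf0 n : cf 0 n = 0. Proof. by []. Qed.
Lemma cf1 n : cf 1 n = if n is 0 then 1 else 0. Proof. by []. Qed.
Lemma cfM (f g : ps) n : cf (f * g) n = fps_mul (cf f) (cf g) n. Proof. by []. Qed.
Lemma cfM0 (f g : ps) : cf (f * g) 0 = cf f 0 * cf g 0.
Proof. by rewrite cfM /fps_mul big_ord1. Qed.
Lemma cfX0 (f : ps) m : cf (f ^+ m) 0 = cf f 0 ^+ m.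
Proof. by elim: m => [|m IH]; rewrite ?expr0 // !exprS cfM0 IH. Qed.

Lemma PS_pow (f : fps) k : PS (fps_pow f k) = PS f ^+ k.
Proof. by elim: k => [|k IH] //; rewrite exprS -IH. Qed.

Definition psX := PS fps_X.
Lemma cfXM (g : ps) n : cf (psX * g) n.+1 = cf g n.
Proof.
rewrite cfM /fps_mul big_ord_recl /= mul0r add0r big_ord_recl /= mul1r subSS subn0.
by rewrite big1 ?addr0 // => i _; rewrite mul0r.
Qed.
Lemma cfXM0 (g : ps) : cf (psX * g) 0 = 0.
Proof. by rewrite cfM0 /= mul0r. Qed.

Lemma size_inv_seq (f : fps) n : size (inv_seq f n) = n.+1.
Proof. by elim: n => [|n IH] //=; rewrite size_rcons IH. Qed.

Lemma nth_inv_seq (f : fps) n i : (i <= n)%N -> nth 0 (inv_seq f n) i = fps_inv f i.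
Proof.
move=> Hi; rewrite /fps_inv; elim: n Hi => [|n IH] Hi.
  by move: Hi; rewrite leqn0 => /eqP ->.
case: (ltngtP i n.+1) Hi => // [Hlt _|-> _]; last by [].
by rewrite /= nth_rcons size_inv_seq Hlt IH.
Qed.

Lemma fps_invS (f : fps) n : fps_inv f n.+1 =
  - (f 0%N)^-1 * \sum_(i < n.+1) f i.+1 * fps_inv f (n - i)%N.
Proof.
rewrite {1}/fps_inv /= nth_rcons size_inv_seq ltnn eqxx.
by congr (_ * _); apply: eq_bigr => i _; rewrite nth_inv_seq // leq_subr.
Qed.

Lemma ps_invP (f : fps) : f 0%N != 0 -> PS f * PS (fps_inv f) = 1.
Proof.
move=> Hf; apply: ps_ext => -[|n].
  by rewrite cfM0 /= /fps_inv /= mulfV.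
rewrite cfM /fps_mul /= big_ord_recl /= subn0 fps_invS mulrA mulrN mulfV // mulN1r.
rewrite addrC; apply/eqP; rewrite subr_eq0; apply/eqP.
by apply: eq_bigr => i _; rewrite subSS.
Qed.

Lemma count_words_S (p : pred (seq step)) n : count p (words n.+1) =
  (count (fun w => p (Up :: w)) (words n) + count (fun w => p (Down :: w)) (words n)
   + count (fun w => p (Flat :: w)) (words n))%N.
Proof.
rewrite /=; elim: (words n) => [|w l IH] //=.
rewrite IH /=; lia.
Qed.

Lemma count_andb (T : Type) (b : bool) (p : pred T) l :
  count (fun x => b && p x) l = if b then count p l else 0%N.
Proof. by case: b => //=; rewrite count_pred0. Qed.

Definition Pf (H : int) (f : bool) (y : int) (s : seq step) : bool :=
  [&& all (fun x => 0 <= x <= H) (levels y s), last y (levels y s) == 0 &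
      f || (H \notin horiz_levels y s)].
Definition cnt (H : int) f n y := count (Pf H f y) (words n).

Lemma Pf_Up H f y w : Pf H f y (Up :: w) = (0 <= y + 1 <= H) && Pf H f (y + 1) w.
Proof. by rewrite /Pf /= -andbA. Qed.
Lemma Pf_Down H f y w : Pf H f y (Down :: w) = (0 <= y - 1 <= H) && Pf H f (y - 1) w.
Proof. by rewrite /Pf /= -andbA. Qed.
Lemma Pf_Flat H f y w : Pf H f y (Flat :: w) = ((0 <= y <= H) && (f || (H != y))) && Pf H f y w.
Proof.
rewrite /Pf /= addr0 in_cons negb_or.
by case: f (0 <= y <= H) (H != y) (all _ (levels y w)) (last y _ == 0) (H \notin _) => [] [] [] [] [] [].
Qed.

Lemma cntS H f n y : cnt H f n.+1 y =
  addn (addn (if 0 <= y + 1 <= H then cnt H f n (y + 1) else 0%N)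
   (if 0 <= y - 1 <= H then cnt H f n (y - 1) else 0%N))
   (if (0 <= y <= H) && (f || (H != y)) then cnt H f n y else 0%N).
Proof.
rewrite /cnt count_words_S.
rewrite (eq_count (Pf_Up H f y)) (eq_count (Pf_Down H f y)) (eq_count (Pf_Flat H f y)).
by rewrite !count_andb.
Qed.

Lemma cnt0 H f y : cnt H f 0 y = (y == 0).
Proof. by rewrite /cnt /= /Pf /= orbT andbT addn0. Qed.

Definition Ef (V : ps) (K y : nat) := V ^+ y - V ^+ (K - 2 - y).
Definition Wf (V : ps) := 1 + (V + V ^+ 2).

Lemma Eid (V : ps) (h : nat) (f : bool) (y : nat) : (y <= h)%N ->
  Wf V * Ef V (2 * h + 3 + f) y =
  (if y == 0%N then 1 - V ^+ (2 * h + 3 + f) else 0) +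
  V * ((if (y < h)%N then Ef V (2 * h + 3 + f) y.+1 else 0) +
       (if (0 < y)%N then Ef V (2 * h + 3 + f) y.-1 else 0) +
       (if f || (y != h) then Ef V (2 * h + 3 + f) y else 0)).
Proof.
rewrite /Wf /Ef; case: y => [|y] Hy.
  case: h Hy => [|h] _.
    by case: f => /=; rewrite !exprS !expr0; ring.
  set m := (2 * h + 2 + f)%N.
  have -> : (2 * h.+1 + 3 + f - 2 - 0 = m.+1)%N by rewrite /m; lia.
  have -> : (2 * h.+1 + 3 + f - 2 - 1 = m)%N by rewrite /m; lia.
  have -> : (2 * h.+1 + 3 + f = m.+3)%N by rewrite /m; lia.
  by rewrite /= orbT !exprS !expr0 /=; ring.
case: (ltngtP y.+1 h) Hy => // [Hlt|<-] _.
  set m := (2 * h + f - y - 1)%N.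
  have -> : (2 * h + 3 + f - 2 - y.+1 = m.+1)%N by rewrite /m; lia.
  have -> : (2 * h + 3 + f - 2 - y.+2 = m)%N by rewrite /m; lia.
  have -> : (2 * h + 3 + f - 2 - y = m.+2)%N by rewrite /m; lia.
  rewrite /= orbT.
  rewrite !exprS !expr0; ring.
rewrite /= orbF.
case: f => /=.
  have -> : (2 * y.+1 + 3 + 1 - 2 - y.+1 = y.+3)%N by lia.
  have -> : (2 * y.+1 + 3 + 1 - 2 - y = y.+4)%N by lia.
  rewrite !exprS !expr0; ring.
have -> : (2 * y.+1 + 3 + 0 - 2 - y.+1 = y.+2)%N by lia.
have -> : (2 * y.+1 + 3 + 0 - 2 - y = y.+3)%N by lia.
rewrite !exprS !expr0; ring.
Qed.

Lemma ring_aux (A S W I X V E : ps) : W * E = A + V * S -> X * W = V ->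
  W * E * I = A * I + X * (W * I * S).
Proof. by move=> h1 h2; rewrite h1 -h2; ring. Qed.

Lemma if_mul (c : bool) (a b : ps) : (if c then a * b else 0) = a * (if c then b else 0).
Proof. by case: c; rewrite ?mulr0. Qed.

Definition Df (V I : ps) K y := Wf V * Ef V K y * I.

Lemma Dsys (V I : ps) (h : nat) (f : bool) (y : nat) : (y <= h)%N ->
  psX * Wf V = V -> (1 - V ^+ (2 * h + 3 + f)) * I = 1 ->
  let K := (2 * h + 3 + f)%N in
  Df V I K y = (if y == 0%N then 1 else 0) +
    psX * ((if (y < h)%N then Df V I K y.+1 else 0) +
       (if (0 < y)%N then Df V I K y.-1 else 0) +
       (if f || (y != h) then Df V I K y else 0)).
Proof.
move=> Hy HX HI K; rewrite /Df.
have im : forall (c : bool) (a : ps), (if c then Wf V * a * I else 0) = Wf V * I * (if c then a else 0).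
  by move=> [] a; rewrite ?mulr0 // mulrAC.
rewrite !im -!mulrDr (ring_aux I (Eid V f Hy) HX); congr (_ + _).
by case: (y == 0%N); rewrite ?mul0r.
Qed.

Lemma Dcount (V I : ps) (h : nat) (f : bool) : cf V 0 = 0 ->
  psX * Wf V = V -> (1 - V ^+ (2 * h + 3 + f)) * I = 1 ->
  forall n y, (y <= h)%N ->
  cf (Df V I (2 * h + 3 + f) y) n = (cnt h%:Z f n y%:Z)%:R.
Proof.
move=> V0 HX HI n; elim: n => [|n IH] y Hy.
  have I0 : cf I 0 = 1.
    move/(congr1 (fun g => cf g 0%N)): HI; rewrite cfM0 cfB cfX0 V0 expr0n /=.
    by rewrite addn3 /= subr0 mul1r.
  rewrite /Df !cfM0 I0 mulr1 /Wf /Ef cfD cfD cfB !cfX0 V0 !expr0n /= cnt0.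
  have -> : (2 * h + 3 + f - 2 - y == 0)%N = false by apply/negbTE; lia.
  by rewrite subr0 addr0 mul1r; case: y {Hy} => [|y] //=.
rewrite (Dsys Hy HX HI) cfD cfXM cntS !natrD !cfD.
have -> : cf (if y == 0%N then 1 else 0) n.+1 = 0 by case: (y == 0%N).
rewrite add0r; congr (_ + _ + _).
- have -> : (0 <= y%:Z + 1 <= h%:Z) = (y < h)%N by apply/idP/idP; lia.
  have -> : (y%:Z + 1) = (y.+1)%:Z by lia.
  by case: ifP => H1 //; rewrite IH.
- case: y Hy IH => [|y] Hy IH; first by [].
  have -> : (y.+1%:Z - 1) = y%:Z by lia.
  rewrite (_ : (0 < y.+1)%N = true) // (_ : y.+1.-1 = y) // IH ?(ltnW Hy) //.
  by rewrite (_ : (0 <= y%:Z <= h%:Z) = true) //; apply/andP; split; lia.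
- have -> : (0 <= y%:Z <= h%:Z) by apply/andP; split; lia.
  have -> : (h%:Z != y%:Z) = (y != h) by rewrite eq_sym.
  by case: ifP => //; rewrite IH.
Qed.

Lemma count_split (T : Type) (a b : pred T) l :
  count a l = (count (fun x => a x && b x) l + count (fun x => a x && ~~ b x) l)%N.
Proof. by elim: l => //= x l ->; case: (a x); case: (b x) => /=; lia. Qed.

Lemma horiz_sub x y s : x \in horiz_levels y s -> x \in y :: levels y s.
Proof.
elim: s y => [|a s IH] y //=.
case: a => /=; first (by move/IH => H; rewrite in_cons H orbT);
  first (by move/IH => H; rewrite in_cons H orbT).
by rewrite addr0 in_cons => /orP [/eqP->|/IH H]; rewrite ?mem_head // in_cons H orbT.
Qed.

Lemma all_range (l : seq int) (H : int) :
  all (fun x => 0 <= x <= H) l = all (fun x => 0 <= x) l && all (fun x => x <= H) l.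
Proof. by elim: l => //= x l ->; rewrite -!andbA; congr andb; rewrite andbCA. Qed.

Lemma height_le (l : seq int) (H : int) : 0 <= H -> (foldr Num.max 0 l <= H) = all (fun x => x <= H) l.
Proof. by move=> H0; elim: l => //= x l <-; rewrite ge_max. Qed.

Lemma height_ge (l : seq int) x : x \in 0 :: l -> x <= foldr Num.max 0 l.
Proof.
have H0 : forall l : seq int, 0 <= foldr Num.max 0 l.
  by elim => //= a l' Hl; rewrite le_max Hl orbT.
elim: l => [|y l IH] /=; first by rewrite in_cons orbF => /eqP ->.
rewrite !in_cons le_max => /or3P [/eqP->|/eqP->|H].
- by rewrite (H0 l) orbT.
- by rewrite lexx.
- by rewrite IH ?orbT // in_cons H orbT.
Qed.

Lemma a_eq (h : nat) s : [&& is_motzkin s, path_height s == h%:Z & h%:Z \in horiz_levels 0 s] =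
  Pf h%:Z true 0 s && (h%:Z \in horiz_levels 0 s).
Proof.
rewrite /is_motzkin /path_height /Pf orTb andbT all_range.
case E: (h%:Z \in horiz_levels 0 s); rewrite ?andbF //.
have Hh := height_ge (horiz_sub E).
rewrite [_ == h%:Z]eq_le Hh andbT height_le //.
by case: (all _ _) (all _ _) (last _ _ == _) => [] [] [].
Qed.

Lemma a_cnt n h : (a_count n h + cnt h%:Z false n 0)%N = cnt h%:Z true n 0.
Proof.
rewrite /cnt (count_split (Pf h%:Z true 0) (fun s => h%:Z \in horiz_levels 0 s)).
congr addn; apply: eq_count => s; first by rewrite a_eq.
by rewrite /Pf /= andbT -andbA.
Qed.

Lemma b_eq (h : nat) s : [&& is_motzkin s, path_height s == h%:Z & h%:Z \notin horiz_levels 0 s] =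
  Pf h%:Z false 0 s && (path_height s == h%:Z).
Proof.
rewrite /is_motzkin /path_height /Pf /= all_range.
case E: (foldr Num.max 0 (levels 0 s) == h%:Z); rewrite ?andbF ?andbT //.
have A : all (fun x => x <= h%:Z) (levels 0 s) by rewrite -height_le // (eqP E).
rewrite A andbT.
by case: (all _ _) (_ \notin _) (last _ _ == _) => [] [] [].
Qed.

Lemma int_aux (x : int) (h' : nat) : x <= h'.+1%:Z -> x <> h'.+1%:Z -> x <= h'%:Z.
Proof. lia. Qed.

Lemma int_aux2 (x : int) (h' : nat) : x <= h'%:Z -> x != h'.+1%:Z.
Proof. by move=> H; apply/eqP; lia. Qed.

Lemma b_rest (h : nat) s : Pf h%:Z false 0 s && (path_height s != h%:Z) =
  if h is h'.+1 then Pf h'%:Z true 0 s else false.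
Proof.
rewrite /Pf /path_height /= all_range.
case: h => [|h'].
  case A: (all (fun x => x <= 0) (levels 0 s)); rewrite ?andbF ?andFb //=.
  have -> : foldr Num.max 0 (levels 0 s) = 0.
    by apply/eqP; rewrite eq_le height_le // A /=; exact: (height_ge (mem_head _ _)).
  by rewrite andbC /=.
rewrite andbT all_range.
apply/idP/idP.
  move/andP => [/and3P [/andP [A0 Ah] L Hz] Hne].
  have Hle : foldr Num.max 0 (levels 0 s) <= h'.+1%:Z by rewrite height_le.
  move/eqP: Hne => Hne.
  have Hle' : foldr Num.max 0 (levels 0 s) <= h'%:Z.
    exact: (int_aux Hle Hne).
  by rewrite A0 L /= andbT -height_le.
move/andP => [/andP [A0 Ah'] L].
have Hle : foldr Num.max 0 (levels 0 s) <= h'%:Z by rewrite height_le.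
have Ah : all (fun x => x <= h'.+1%:Z) (levels 0 s) by rewrite -height_le //; lia.
rewrite A0 Ah L /=; apply/andP; split.
  by apply/negP => /horiz_sub /height_ge; lia.
exact: int_aux2 Hle.
Qed.

Lemma b_cnt n h : cnt h%:Z false n 0 =
  (b_count n h + (if h is h'.+1 then cnt h'%:Z true n 0 else 0))%N.
Proof.
rewrite /cnt (count_split (Pf h%:Z false 0) (fun s => path_height s == h%:Z)).
congr addn; first by apply: eq_count => s; rewrite b_eq.
rewrite (eq_count (b_rest h)); case: h => [|h'] //.
by rewrite count_pred0.
Qed.

Lemma PS_term (v : fps) K : PS (term v K) =
  (PS v ^+ K - PS v ^+ (K - 2)) * PS (fps_inv (fps_sub fps_one (fps_pow v K))).
Proof. by rewrite -!PS_pow. Qed.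

Lemma G_eq (W I a b : ps) : (1 - a) * I = 1 -> W * (1 - b) * I = W * (1 + (a - b) * I).
Proof.
move=> H; apply/eqP; rewrite -subr_eq0.
have -> : W * (1 - b) * I - W * (1 + (a - b) * I) = W * ((1 - a) * I - 1) by ring.
by rewrite H subrr mulr0.
Qed.

Lemma cfV0 (V : ps) m : cf V 0 = 0 -> (0 < m)%N -> cf (V ^+ m) 0 = 0.
Proof. by move=> H0 Hm; rewrite cfX0 H0 expr0n; case: m Hm. Qed.

Lemma inv_K (v : fps) K : v 0%N = 0 -> (0 < K)%N ->
  (1 - PS v ^+ K) * PS (fps_inv (fps_sub fps_one (fps_pow v K))) = 1.
Proof.
move=> v0 HK.
have -> : 1 - PS v ^+ K = PS (fps_sub fps_one (fps_pow v K)) by rewrite -PS_pow.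
apply: ps_invP.
have := cfV0 (V := PS v) v0 HK; rewrite -PS_pow /= => H2.
by rewrite /fps_sub H2.
Qed.

Lemma Df0 (V I : ps) K : Df V I K 0 = Wf V * (1 - V ^+ (K - 2)) * I.
Proof. by rewrite /Df /Ef expr0 subn0. Qed.

Theorem mainTheorem2 (h : nat) (v : fps) :
  v 0%N = 0 ->
  fps_X = fps_mul v (fps_inv (onevv v)) ->
  (forall n : nat, Horiz h n =
     fps_mul (onevv v) (fps_sub (term v (2 * h + 4)) (term v (2 * h + 3))) n) /\
  (forall n : nat, NoHoriz h n =
     fps_mul (onevv v) (fps_sub (term v (2 * h + 3)) (term v (2 * h + 2))) n).
Proof.
move=> v0 HX.
set V := PS v.
have V0 : cf V 0 = 0 by [].
have eW : PS (onevv v) = Wf V by rewrite /Wf -PS_pow.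
have Winv : Wf V * PS (fps_inv (onevv v)) = 1.
  rewrite -eW; apply: ps_invP.
  have := cfV0 (V := V) v0 (isT : (0 < 2)%N); rewrite -PS_pow /= => H2.
  by rewrite /onevv /fps_add /= H2 v0 !addr0 oner_eq0.
have HXW : psX * Wf V = V.
  by rewrite /psX HX (_ : PS (fps_mul _ _) = V * PS (fps_inv (onevv v))) // -mulrA (mulrC (PS (fps_inv (onevv v)))) Winv mulr1.
pose I K := PS (fps_inv (fps_sub fps_one (fps_pow v K))).
have HI : forall K, (0 < K)%N -> (1 - V ^+ K) * I K = 1 by move=> K HK; apply: inv_K.
have cntD : forall (h' : nat) (f : bool) n, (cnt h'%:Z f n 0)%:R =
    cf (Wf V * (1 - V ^+ (2 * h' + 1 + f)) * I (2 * h' + 3 + f)%N) n.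
  move=> h' f n; rewrite -(Dcount V0 HXW (HI _ _) n (leq0n h')); last by rewrite addn3.
  by rewrite Df0; congr (cf (_ * (1 - V ^+ _) * _) n); lia.
have GE : forall K, (2 <= K)%N -> Wf V * (1 - V ^+ (K - 2)) * I K = Wf V * (1 + PS (term v K)).
  move=> K HK; rewrite PS_term; apply: G_eq; apply: HI; lia.
split=> n.
- rewrite /Horiz -(addnK (cnt h%:Z false n 0) (a_count n h)) a_cnt natrB; last first.
    by rewrite -a_cnt leq_addl.
  rewrite !cntD.
  rewrite (_ : (2 * h + 3 + true = 2 * h + 4)%N); last by lia.
  rewrite (_ : (2 * h + 3 + false = 2 * h + 3)%N); last by lia.
  rewrite (_ : (2 * h + 1 + true = 2 * h + 4 - 2)%N); last by lia.
  rewrite (_ : (2 * h + 1 + false = 2 * h + 3 - 2)%N); last by lia.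
  rewrite !GE; try lia.
  rewrite -cfB -mulrBr.
  have -> : fps_mul (onevv v) (fps_sub (term v (2 * h + 4)) (term v (2 * h + 3))) n =
    cf (PS (onevv v) * (PS (term v (2 * h + 4)) - PS (term v (2 * h + 3)))) n by [].
  by rewrite eW; congr (cf (_ * _) n); ring.
- rewrite /NoHoriz.
  have Hb := b_cnt n h.
  have -> : (b_count n h)%:R = (cnt h%:Z false n 0)%:R -
      (if h is h'.+1 then cnt h'%:Z true n 0 else 0%N)%:R :> rat.
    by rewrite Hb natrD addrK.
  have -> : (if h is h'.+1 then cnt h'%:Z true n 0 else 0%N)%:R =
     cf (Wf V * (1 - V ^+ (2 * h + 2 - 2)) * I (2 * h + 2)%N) n.
    case: h {Hb} => [|h'].
      rewrite (_ : (2 * 0 + 2 - 2 = 0)%N) // expr0 subrr mulr0 mul0r; by [].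
    rewrite cntD; congr (cf (_ * (1 - V ^+ _) * I _) n); lia.
  rewrite cntD.
  rewrite (_ : (2 * h + 3 + false = 2 * h + 3)%N); last by lia.
  rewrite (_ : (2 * h + 1 + false = 2 * h + 3 - 2)%N); last by lia.
  rewrite !GE; try lia.
  rewrite -cfB -mulrBr.
  have -> : fps_mul (onevv v) (fps_sub (term v (2 * h + 3)) (term v (2 * h + 2))) n =
    cf (PS (onevv v) * (PS (term v (2 * h + 3)) - PS (term v (2 * h + 2)))) n by [].
  by rewrite eW; congr (cf (_ * _) n); ring.
Qed.
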